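(* Let $L \ge N$ be positive integers, let $\mathbf{T} \in \mathbb{R}^{L\times N}$ have full rank $N$, and let $\gamma>0$. Equip $\mathbb{R}^N$ with the scalar product $\langle \mathbf{x},\mathbf{y}\rangle_{\mathbf{T}} := \mathbf{x}^{T}\mathbf{T}^{*}\mathbf{T}\mathbf{y}$ and norm $\|\mathbf{x}\|_{\mathbf{T}} := \|\mathbf{T}\mathbf{x}\|_2$. Then the operator $\mathbf{T}^{\dagger} S_\gamma \mathbf{T}:\mathbb{R}^N\to\mathbb{R}^N$ is the proximity operator, with respect to this scalar product, of a proper, lower semi-continuous, convex function $\Phi:\mathbb{R}^N\to\mathbb{R}\cup\{+\infty\}$; that is, for every $\mathbf{z}\in\mathbb{R}^N$, $$\mathbf{T}^{\dagger} S_\gamma (\mathbf{T}\mathbf{z}) = \operatorname*{argmin}_{\mathbf{x}\in\mathbb{R}^N}\Big\{\tfrac12\|\mathbf{z}-\mathbf{x}\|_{\mathbf{T}}^2 + \Phi(\mathbf{x})\Big\}.$$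
   Context: $\mathbf{T}^{*}$ denotes the transpose of $\mathbf{T}$ and $\mathbf{T}^{\dagger} = (\mathbf{T}^{*}\mathbf{T})^{-1}\mathbf{T}^{*}$ its Moore–Penrose inverse. $S_\gamma:\mathbb{R}^L\to\mathbb{R}^L$ is the componentwise soft shrinkage operator: $[S_\gamma(\mathbf{y})]_j = y_j-\gamma$ if $y_j\ge\gamma$, $y_j+\gamma$ if $y_j\le-\gamma$, and $0$ if $|y_j|<\gamma$. Equivalently, the conclusion says: $\mathbf{x}=\mathbf{T}^{\dagger}S_\gamma\mathbf{T}\mathbf{z}$ if and only if $\mathbf{z}-\mathbf{x}$ lies in the subdifferential of $\Phi$ at $\mathbf{x}$ taken with respect to $\langle\cdot,\cdot\rangle_{\mathbf{T}}$, i.e. $\langle \mathbf{z}-\mathbf{x}, \tilde{\mathbf{x}}-\mathbf{x}\rangle_{\mathbf{T}} \le \Phi(\tilde{\mathbf{x}})-\Phi(\mathbf{x})$ for all $\tilde{\mathbf{x}}$. *)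

(* Defs.v *)
From HB Require Import structures.
From mathcomp Require Import all_boot all_order all_algebra.
From mathcomp Require Import all_classical all_reals all_analysis.
Set Implicit Arguments. Unset Strict Implicit. Unset Printing Implicit Defensive.
Import Order.TTheory GRing.Theory Num.Theory.
Local Open Scope classical_set_scope.
Local Open Scope ring_scope.

Definition soft_shrink (R : realType) (L : nat) (gamma : R) (y : 'cV[R]_L) : 'cV[R]_L :=
  \col_j (if gamma <= y j 0 then y j 0 - gamma
          else if y j 0 <= - gamma then y j 0 + gamma else 0).

(* Moore--Penrose inverse of a full column rank matrix: (T^* T)^{-1} T^*. *)
Definition mp_inv (R : realType) (L N : nat) (T : 'M[R]_(L, N)) : 'M[R]_(N, L) :=
  invmx (T^T *m T) *m T^T.

Definition scalT (R : realType) (L N : nat) (T : 'M[R]_(L, N)) (x y : 'cV[R]_N) : R :=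
  (x^T *m T^T *m T *m y) 0 0.

Definition normT2 (R : realType) (L N : nat) (T : 'M[R]_(L, N)) (x : 'cV[R]_N) : R :=
  scalT T x x.

Definition proper_fun (R : realType) (X : Type) (f : X -> \bar R) : Prop :=
  (forall x, f x != -oo%E) /\ (exists x, f x != +oo%E).

Definition convex_fun (R : realType) (N : nat) (f : 'cV[R]_N -> \bar R) : Prop :=
  forall (x y : 'cV[R]_N) (t : R), 0 < t -> t < 1 ->
    (f (t *: x + (1 - t) *: y)%R <= t%:E * f x + (1 - t)%:E * f y)%E.

Definition argmin (X : Type) (R : realType) (g : X -> \bar R) : set X :=
  [set x | forall y, (g x <= g y)%E].

(* Main.v *)
Require Import Defs.
From HB Require Import structures.
From mathcomp Require Import all_boot all_order all_algebra.
From mathcomp Require Import all_classical all_reals all_analysis.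
From mathcomp Require Import lra ring.
Import Order.TTheory GRing.Theory Num.Theory.
Import numFieldNormedType.Exports.
Local Open Scope classical_set_scope.
Local Open Scope ring_scope.

Set Implicit Arguments. Unset Strict Implicit.
Section S.
Variable R : realType.

Definition sq {L} (v : 'cV[R]_L) : R := \sum_j (v j 0) ^+ 2.
Definition l1 {L} (v : 'cV[R]_L) : R := \sum_j `|v j 0|.

Lemma normT2E L N (T : 'M[R]_(L, N)) v : normT2 T v = sq (T *m v).
Proof.
rewrite /normT2 /scalT /sq -trmx_mul -mulmxA mxE.
by apply: eq_bigr => j _; rewrite mxE expr2.
Qed.

Lemma soft1 (g a t : R) : 0 < g ->
  let s := if g <= a then a - g else if a <= - g then a + g else 0 in
  2^-1 * (a - s)^+2 + g * `|s| + 2^-1 * (t - s)^+2 <= 2^-1 * (a - t)^+2 + g * `|t|.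
Proof.
move=> g0 /=.
have [ht|ht] := lerP 0 t.
- rewrite (ger0_norm ht).
  case: ifP => h1; first by rewrite ger0_norm ?subr_ge0 //; nra.
  case: ifP => h2; first by rewrite ler0_norm; nra.
  rewrite normr0; move/negbT: h1; move/negbT: h2; rewrite -!ltNge => h1 h2; nra.
- rewrite (ltr0_norm ht).
  case: ifP => h1; first by rewrite ger0_norm ?subr_ge0 //; nra.
  case: ifP => h2; first by rewrite ler0_norm; nra.
  rewrite normr0; move/negbT: h1; move/negbT: h2; rewrite -!ltNge => h1 h2; nra.
Qed.


Lemma soft_sum L (g : R) (a y : 'cV[R]_L) : 0 < g ->
  let ys := soft_shrink g a in
  2^-1 * sq (a - ys) + g * l1 ys + 2^-1 * sq (y - ys) <= 2^-1 * sq (a - y) + g * l1 y.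
Proof.
move=> g0 /=; rewrite /sq /l1 !mulr_sumr -!big_split /=.
apply: ler_sum => j _; rewrite !mxE.

exact: (@soft1 g (a j 0) (y j 0) g0).
Qed.

Lemma sq_ge0 L (v : 'cV[R]_L) : 0 <= sq v.
Proof. by apply: sumr_ge0 => j _; rewrite sqr_ge0. Qed.

Lemma l1_ge0 L (v : 'cV[R]_L) : 0 <= l1 v.
Proof. by apply: sumr_ge0 => j _. Qed.

Lemma sq_eq0 L (v : 'cV[R]_L) : sq v <= 0 -> v = 0.
Proof.
move=> h; have h0 : sq v = 0 by apply/eqP; rewrite eq_le h sq_ge0.
apply/matrixP => i j; rewrite (ord1 j) mxE.
have := psumr_eq0P (fun k _ => sqr_ge0 (v k 0)) h0.
by move=> /(_ i isT) /eqP; rewrite sqrf_eq0 => /eqP.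
Qed.

Lemma sq_orth L N (T : 'M[R]_(L, N)) u w : T^T *m w = 0 ->
  sq (T *m u + w) = sq (T *m u) + sq w.
Proof.
move=> hw.
have h0 : \sum_j (T *m u) j 0 * w j 0 = 0.
  have : ((T *m u)^T *m w) 0 0 = 0 by rewrite trmx_mul -mulmxA hw mulmx0 mxE.
  rewrite mxE => e; rewrite -[RHS]e; apply: eq_bigr => j _; by rewrite !mxE.
rewrite /sq.
transitivity (\sum_j ((T *m u) j 0 ^+ 2 + w j 0 ^+ 2 + 2 * ((T *m u) j 0 * w j 0))).
  by apply: eq_bigr => j _; rewrite !mxE; ring.
by rewrite !big_split /= -mulr_sumr h0 mulr0 addr0.
Qed.

Lemma T_inj L N (T : 'M[R]_(L, N)) (d : 'cV[R]_N) : \rank T = N -> T *m d = 0 -> d = 0.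
Proof.
move=> hr hd.
have rf : row_free T^T by rewrite /row_free mxrank_tr hr.
have : d^T *m T^T = 0 *m T^T by rewrite -trmx_mul hd mul0mx trmx0.
by move/(row_free_inj rf)/(congr1 trmx); rewrite trmxK trmx0.
Qed.

Lemma TT_unit L N (T : 'M[R]_(L, N)) : \rank T = N -> T^T *m T \in unitmx.
Proof.
move=> hr; rewrite -row_free_unit; apply: inj_row_free => v hv.
have h : sq (T *m v^T) <= 0.
  rewrite -normT2E /normT2 /scalT trmxK.
  by rewrite -(mulmxA v) hv mul0mx mxE.
have := T_inj hr (sq_eq0 h).
by move/(congr1 trmx); rewrite trmxK trmx0.
Qed.


Section P.
Variables (L N : nat) (T : 'M[R]_(L, N)) (gamma : R).
Hypothesis g0 : 0 < gamma.

Definition cc (x : 'cV[R]_N) (w : 'cV[R]_L) : R :=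
  \sum_j (gamma * `|(T *m x + w) j 0| + 2^-1 * (w j 0) ^+ 2).
Definition Sset x := [set r | exists2 w, T^T *m w = 0 & r = cc x w].
Definition phi x := inf (Sset x).

Lemma cc_ge0 x w : 0 <= cc x w.
Proof.
apply: sumr_ge0 => j _; apply: addr_ge0; first by rewrite mulr_ge0 // ltW.
by rewrite mulr_ge0 // ?sqr_ge0 // invr_ge0.
Qed.

Lemma Sset_lb x : has_lbound (Sset x).
Proof. by exists 0 => r [w _ ->]; exact: cc_ge0. Qed.

Lemma Sset_ne x : nonempty (Sset x).
Proof. by exists (cc x 0), 0 => //; rewrite mulmx0. Qed.

Lemma phi_le x w : T^T *m w = 0 -> phi x <= cc x w.
Proof. by move=> hw; apply: (ge_inf (Sset_lb x)); exists w. Qed.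

Lemma phi_ge0 x : 0 <= phi x.
Proof. by apply: lb_le_inf; [exact: Sset_ne| move=> r [w _ ->]; exact: cc_ge0]. Qed.

Lemma phi_ge m k x : 0 < k -> (forall w, T^T *m w = 0 -> m <= k * cc x w) ->
  m <= k * phi x.
Proof.
move=> k0 h; rewrite -ler_pdivrMl //.
apply: lb_le_inf; first exact: Sset_ne.
by move=> r [w hw ->]; rewrite ler_pdivrMl // h.
Qed.


Lemma conv1 (t A B a b : R) : 0 < t -> t < 1 ->
  gamma * `|t * A + (1 - t) * B| + 2^-1 * (t * a + (1 - t) * b) ^+ 2 <=
  t * (gamma * `|A| + 2^-1 * a ^+ 2) + (1 - t) * (gamma * `|B| + 2^-1 * b ^+ 2).
Proof.
move=> t0 t1.
have hn : `|t * A + (1 - t) * B| <= t * `|A| + (1 - t) * `|B|.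
  apply: le_trans (ler_normD _ _) _.
  have t2 : 0 <= 1 - t by rewrite subr_ge0 ltW.
  by rewrite !normrM (ger0_norm (ltW t0)) (ger0_norm t2).
have hg : gamma * `|t * A + (1 - t) * B| <= gamma * (t * `|A| + (1 - t) * `|B|).
  by rewrite ler_wpM2l // ltW.
have hs : 0 <= t * (1 - t) * (a - b) ^+ 2.
  by rewrite mulr_ge0 ?sqr_ge0 // mulr_ge0 ?subr_ge0 ?ltW.
nra.
Qed.

Lemma cc_conv x1 x2 w1 w2 t : 0 < t -> t < 1 ->
  cc (t *: x1 + (1 - t) *: x2) (t *: w1 + (1 - t) *: w2) <=
  t * cc x1 w1 + (1 - t) * cc x2 w2.
Proof.
move=> t0 t1.
have E : T *m (t *: x1 + (1 - t) *: x2) + (t *: w1 + (1 - t) *: w2) =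
   t *: (T *m x1 + w1) + (1 - t) *: (T *m x2 + w2).
  by rewrite mulmxDr -!scalemxAr !scalerDr addrACA.
rewrite /cc E !mulr_sumr -big_split /=; apply: ler_sum => j _.
by rewrite !mxE; apply: conv1.
Qed.

Lemma cc_lip x y w : cc x w <= cc y w + gamma * l1 (T *m (x - y)).
Proof.
rewrite /cc /l1 mulr_sumr -big_split /=; apply: ler_sum => j _.
have E : (T *m x + w) j 0 = (T *m y + w) j 0 + (T *m (x - y)) j 0.
  by rewrite mulmxBr !mxE; ring.
rewrite E; have := ler_normD ((T *m y + w) j 0) ((T *m (x - y)) j 0).
have := ltW g0; nra.
Qed.

Lemma cc_G z x w : T^T *m w = 0 ->
  2^-1 * normT2 T (z - x) + cc x w =
  2^-1 * sq (T *m z - (T *m x + w)) + gamma * l1 (T *m x + w).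
Proof.
move=> hw.
have E : T *m z - (T *m x + w) = T *m (z - x) + (- w).
  by rewrite mulmxBr opprD addrA.
have hw' : T^T *m (- w) = 0 by rewrite mulmxN hw oppr0.
rewrite E sq_orth // normT2E /cc /sq /l1 big_split /= -!mulr_sumr.
have -> : \sum_j (- w) j 0 ^+ 2 = \sum_j w j 0 ^+ 2.
  by apply: eq_bigr => j _; rewrite mxE sqrrN.
ring.
Qed.


Lemma W_conv (w1 w2 : 'cV[R]_L) t : T^T *m w1 = 0 -> T^T *m w2 = 0 ->
  T^T *m (t *: w1 + (1 - t) *: w2) = 0.
Proof. by move=> h1 h2; rewrite mulmxDr -!scalemxAr h1 h2 !scaler0 addr0. Qed.

Lemma phi_conv x1 x2 t : 0 < t -> t < 1 ->
  phi (t *: x1 + (1 - t) *: x2) <= t * phi x1 + (1 - t) * phi x2.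
Proof.
move=> t0 t1; set xt := t *: x1 + (1 - t) *: x2.
have t2 : 0 < 1 - t by rewrite subr_gt0.
suff : phi xt - t * phi x1 <= (1 - t) * phi x2 by rewrite lerBlDl.
apply: phi_ge => // w2 h2.
rewrite lerBlDl addrC -lerBlDl.
apply: phi_ge => // w1 h1.
rewrite lerBlDl addrC.
exact: le_trans (phi_le _ (W_conv t h1 h2)) (cc_conv _ _ _ _ t0 t1).
Qed.

Lemma phi_lip x y : phi x - gamma * l1 (T *m (x - y)) <= phi y.
Proof.
rewrite -[phi y]mul1r; apply: phi_ge => // w hw.
by rewrite mul1r lerBlDr; apply: le_trans (phi_le _ hw) (cc_lip _ _ _).
Qed.

Lemma l1_bound (x y : 'cV[R]_N) d : (forall k, `|x k 0 - y k 0| <= d) ->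
  l1 (T *m (x - y)) <= (\sum_j \sum_k `|T j k|) * d.
Proof.
move=> h; rewrite /l1 mulr_suml; apply: ler_sum => j _.
rewrite mxE mulr_suml; apply: le_trans (ler_norm_sum _ _ _) _.
apply: ler_sum => k _; rewrite mxE normrM ler_wpM2l //.
by rewrite mxE.
Qed.


Hypothesis hr : \rank T = N.

Lemma argmin_main z :
  let xs := mp_inv T *m soft_shrink gamma (T *m z) in
  let F x := 2^-1 * normT2 T (z - x) + phi x in
  (forall y, F xs <= F y) /\ (forall x, F x <= F xs -> x = xs).
Proof.
move=> xs F.
set a := T *m z; set ys := soft_shrink gamma a.
set ws := ys - T *m xs.
have hws : T^T *m ws = 0.
  rewrite /ws /xs /mp_inv mulmxBr !mulmxA mulmxV ?mul1mx ?subrr //.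
  exact: TT_unit.
have hys : T *m xs + ws = ys by rewrite /ws addrC subrK.
set Gys := 2^-1 * sq (a - ys) + gamma * l1 ys.
have i1 : F xs <= Gys.
  rewrite /F /Gys -hys -cc_G //; rewrite lerD2l; exact: phi_le.
have i3 : forall x, Gys + 2^-1 * sq (T *m (x - xs)) <= F x.
  move=> x; rewrite /F addrC -lerBlDl -[phi x]mul1r; apply: phi_ge => // w hw.
  rewrite mul1r lerBlDl cc_G //.
  have e : T *m x + w - ys = T *m (x - xs) + (w - ws).
    by rewrite -hys mulmxBr opprD addrACA.
  have hw2 : T^T *m (w - ws) = 0 by rewrite mulmxBr hw hws subrr.
  have := soft_sum a (T *m x + w) g0; rewrite /= -/ys e sq_orth // -/a.
  have := sq_ge0 (w - ws); rewrite /Gys; nra.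
split.
  move=> y; apply: le_trans i1 _; apply: le_trans (i3 y).
  by rewrite lerDl mulr_ge0 ?sq_ge0 // invr_ge0.
move=> x hx; have h := le_trans (i3 x) (le_trans hx i1).
have hs : sq (T *m (x - xs)) <= 0 by lra.
apply/eqP; rewrite -subr_eq0; apply/eqP; apply: (T_inj hr); exact: sq_eq0.
Qed.


Lemma phi_lsc : lower_semicontinuous (fun x : 'cV[R]_N => (phi x)%:E).
Proof.
move=> x a; rewrite lte_fin => ha.
set S := \sum_j \sum_k `|T j k|.
have S0 : 0 <= S by apply: sumr_ge0 => j _; apply: sumr_ge0.
set C := gamma * S.
have C0 : 0 <= C by rewrite mulr_ge0 // ltW.
set e := phi x - a.
have e0 : 0 < e by rewrite subr_gt0.
set d := e / (C + 1).
have C1 : 0 < C + 1 by rewrite ltr_wpDl.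
have d0 : 0 < d by rewrite divr_gt0.
have Cd : C * d < e.
  rewrite /d mulrA ltr_pdivrMr //; nra.
exists (ball x d); first exact: nbhsx_ballx.
move=> y hb; rewrite lte_fin.
have hk : forall k, `|x k 0 - y k 0| <= d.
  move=> k; move: hb => [_ /(_ k 0)].
  rewrite /ball /=. move=> h; exact: ltW.
have h1 := l1_bound hk.
have h2 := phi_lip x y.
have h3 : gamma * l1 (T *m (x - y)) <= C * d.
  by rewrite /C -mulrA ler_wpM2l // ltW.
rewrite /e in Cd; lra.
Qed.

End P.
End S.

Unset Implicit Arguments.

Theorem theorem3p5 (R : realType) (L N : nat) (T : 'M[R]_(L, N)) (gamma : R) :
  (0 < N)%N -> (N <= L)%N -> \rank T = N -> 0 < gamma ->
  exists Phi : 'cV[R]_N -> \bar R,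
    [/\ proper_fun Phi, lower_semicontinuous Phi, convex_fun Phi &
      forall z : 'cV[R]_N,
        argmin (fun x : 'cV[R]_N => ((2^-1 * normT2 T (z - x))%:E + Phi x)%E)
        = [set mp_inv T *m soft_shrink gamma (T *m z)]].
Proof.
move=> _ _ hr g0.
exists (fun x => (phi T gamma x)%:E); split.
- by split; [move=> x | exists 0].
- exact: phi_lsc.
- move=> x y t t0 t1; rewrite -!EFinM -EFinD lee_fin.
  exact: phi_conv.
- move=> z; have [hmin huniq] := argmin_main g0 hr z.
  apply/seteqP; split => x /=.
  + move=> hx; apply: huniq; have := hx (mp_inv T *m soft_shrink gamma (T *m z)).
    by rewrite -!EFinD lee_fin.
  + by move=> -> y; rewrite -!EFinD lee_fin; apply: hmin.
Qed.
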